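(* Let $n\ge1$ and let $\mathbf d=(d_1<\dots<d_s)$ with $1\le d_1$, $d_s\le n$. Then the set of Bruhat polytopes $\{Q^{\mathbf d}_{u,v}:[u,v]\in\operatorname{BI}(\mathbf d,n)\}$ equals the set of twisted Bruhat polytopes $\{\widetilde Q^{\mathbf d}_{u,v}:[u,v]\in\widetilde{\operatorname{BI}}(\mathbf d,n)\}$.
   Context: $\operatorname{Sym}_n$ carries the Bruhat order: $u\le v$ iff some (equivalently every) reduced word for $v$ in the adjacent transpositions $\tau_i=(i,i+1)$ contains a subword that is a word for $u$. For $B\subseteq[n]$, $e_B=\sum_{i\in B}e_i$. Untwisted: for $x\in\operatorname{Sym}_n$ let $\pi^{\mathbf d}\phi(x)\in\mathbb{R}^n$ be the vector whose $k$-th coordinate is $\#\{j: x(k)\ge n+1-d_j\}$ (the image of the permutahedron vertex $(x(1),\dots,x(n))$). $\operatorname{BI}(\mathbf d,n)$ is the set of Bruhat intervals $[u,v]$ such that $v$ is Bruhat-minimal among all $x$ with $\pi^{\mathbf d}\phi(x)=\pi^{\mathbf d}\phi(v)$, and $Q^{\mathbf d}_{u,v}=\operatorname{conv}\{\pi^{\mathbf d}\phi(x):x\in[u,v]\}$. Twisted: for $x\in\operatorname{Sym}_n$ let $\pi^{\mathbf d}\psi(x)=e_{x([d_1])}+\dots+e_{x([d_s])}$ (the image of the vertex $x\cdot(n,n-1,\dots,1)$ of the permutahedron, where $(x\cdot y)_i=y_{x^{-1}(i)}$). $\widetilde{\operatorname{BI}}(\mathbf d,n)$ is the set of Bruhat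 intervals $[u,v]$ such that $v$ is Bruhat-minimal among all $x$ with $\pi^{\mathbf d}\psi(x)=\pi^{\mathbf d}\psi(v)$, and $\widetilde Q^{\mathbf d}_{u,v}=\operatorname{conv}\{\pi^{\mathbf d}\psi(x):x\in[u,v]\}$. *)

(* Defs.v *)
From HB Require Import structures.
From mathcomp Require Import all_boot all_order all_fingroup all_algebra.
From mathcomp Require Import reals.
Set Implicit Arguments. Unset Strict Implicit. Unset Printing Implicit Defensive.
Import Order.TTheory GRing.Theory Num.Theory.
Local Open Scope ring_scope.

(* Conventions: [n] = 'I_n (0-indexed); Sym_n = 'S_n = {perm 'I_n}.
   The 1-indexed value x(k) of the paper is (val (x k)).+1 here. *)

(* adjacent transposition tau_i = (i, i+1) (0-indexed); identity if i+1 = n *)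
Definition adj (n : nat) (i : 'I_n) : 'S_n :=
  match (insub i.+1 : option 'I_n) with Some j => tperm i j | None => 1%g end.

Definition valid_letter (n : nat) (i : 'I_n) : bool := (i.+1 < n)%N.

Definition prodw (n : nat) (w : seq 'I_n) : 'S_n := (\prod_(i <- w) adj i)%g.

Definition word_for (n : nat) (w : seq 'I_n) (v : 'S_n) : Prop :=
  all (@valid_letter n) w /\ prodw w = v.

Definition reduced_word (n : nat) (w : seq 'I_n) (v : 'S_n) : Prop :=
  word_for w v /\ (forall w', word_for w' v -> (size w <= size w')%N).

Definition bruhat_le (n : nat) (u v : 'S_n) : Prop :=
  exists w, reduced_word w v /\ exists w', subseq w' w /\ word_for w' u.

Definition in_interval (n : nat) (u v x : 'S_n) : Prop :=
  bruhat_le u x /\ bruhat_le x v.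

(* (pi^d phi(x))_k = #{ j : x(k) >= n+1-d_j }  (1-indexed x(k) = val (x k) + 1) *)
Definition piphi (n : nat) (d : seq nat) (x : 'S_n) (k : 'I_n) : nat :=
  count (fun dj => n - dj <= val (x k))%N d.

(* pi^d psi(x) = e_{x([d_1])} + ... + e_{x([d_s])}; coordinate i counts the
   j with i \in x([d_j]), i.e. x^{-1}(i) < d_j (0-indexed). *)
Definition pipsi (n : nat) (d : seq nat) (x : 'S_n) (i : 'I_n) : nat :=
  count (fun dj => val ((x^-1)%g i) < dj)%N d.

Definition BI (n : nat) (d : seq nat) (u v : 'S_n) : Prop :=
  bruhat_le u v /\
  (forall x : 'S_n, piphi d x =1 piphi d v -> bruhat_le x v -> x = v).

Definition tBI (n : nat) (d : seq nat) (u v : 'S_n) : Prop :=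
  bruhat_le u v /\
  (forall x : 'S_n, pipsi d x =1 pipsi d v -> bruhat_le x v -> x = v).

Definition conv_interval (R : realType) (n : nat) (f : 'S_n -> 'I_n -> nat)
    (u v : 'S_n) (p : 'rV[R]_n) : Prop :=
  exists lam : 'S_n -> R,
    [/\ forall x, 0 <= lam x,
        forall x, ~ in_interval u v x -> lam x = 0,
        \sum_x lam x = 1
      & p = \sum_x lam x *: \row_k ((f x k)%:R : R)].

Definition Q (R : realType) (n : nat) (d : seq nat) (u v : 'S_n) :=
  @conv_interval R n (piphi d) u v.

Definition tQ (R : realType) (n : nat) (d : seq nat) (u v : 'S_n) :=
  @conv_interval R n (pipsi d) u v.

Arguments Q R {n} d u v p.
Arguments tQ R {n} d u v p.

(* Main.v *)
Require Import Defs.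
From HB Require Import structures.
From mathcomp Require Import all_boot all_order all_fingroup all_algebra.
From mathcomp Require Import reals.
From mathcomp Require Import zify.
From Stdlib Require ClassicalEpsilon Classical.
Set Implicit Arguments. Unset Strict Implicit. Unset Printing Implicit Defensive.

Section Tab.
Variable n : nat.

Definition Pn (x : 'S_n) (a : nat) : nat :=
  if insub a is Some o then val ((x^-1)%g o) else a.

Lemma PnE (x : 'S_n) (o : 'I_n) : Pn x o = val ((x^-1)%g o).
Proof. by rewrite /Pn valK. Qed.

Lemma Pn_out (x : 'S_n) a : n <= a -> Pn x a = a.
Proof. by move=> h; rewrite /Pn insubF // ltnNge h. Qed.

Lemma Pn_lt (x : 'S_n) a : a < n -> Pn x a < n.
Proof. by move=> h; rewrite (PnE x (Ordinal h)); apply: ltn_ord. Qed.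

Lemma Pn_inj (x : 'S_n) a b : a < n -> b < n -> Pn x a = Pn x b -> a = b.
Proof.
move=> ha hb; rewrite (PnE x (Ordinal ha)) (PnE x (Ordinal hb)).
by move/val_inj/perm_inj/(congr1 val).
Qed.

Definition swapn (i a : nat) := if a == i then i.+1 else if a == i.+1 then i else a.

Lemma adj_valid (i : 'I_n) (h : i.+1 < n) : adj i = tperm i (Ordinal h).
Proof. by rewrite /adj insubT /=; congr tperm; apply: val_inj. Qed.

Lemma adjK (i : 'I_n) : (adj i * adj i = 1)%g.
Proof. rewrite /adj; case: insubP => [j _ _|_]; [exact: tperm2 | exact: mulg1]. Qed.

Lemma Pn_swap (x : 'S_n) (i : 'I_n) a : i.+1 < n ->
  Pn (x * adj i)%g a = Pn x (swapn i a).
Proof.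
move=> h; case: (ltnP a n) => ha; last first.
  have -> : swapn i a = a.
    by rewrite /swapn ifN; [rewrite ifN //|]; apply/eqP; lia.
  by rewrite !Pn_out.
rewrite (PnE _ (Ordinal ha)) adj_valid invgM tpermV permM.
have E : forall o : 'I_n, swapn i o = val (tperm i (Ordinal h) o).
  move=> o; rewrite /swapn; case: (eqVneq o i) => [->|ne1]; first by rewrite tpermL eqxx.
  have ne1' : (val o == i) = false by apply/negbTE; rewrite -(inj_eq val_inj) in ne1.
  case: (eqVneq o (Ordinal h)) => [->|ne2]; first by rewrite tpermR /= (_ : (i.+1 == i) = false) ?eqxx //; apply/eqP; lia.
  have ne2' : (val o == i.+1) = false.
    by apply/negbTE; apply: contra ne2 => /eqP e; apply/eqP/val_inj.
  by rewrite ne1' ne2' tpermD // eq_sym.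
rewrite (E (Ordinal ha)) (PnE x (tperm i (Ordinal h) (Ordinal ha))).
by [].
Qed.

Definition g (x : 'S_n) (j a : nat) : nat := (j <= Pn x a) && (a < n).
Definition R (x : 'S_n) (i j : nat) : nat := \sum_(0 <= a < i) g x j a.

Lemma R0 x j : R x 0 j = 0.
Proof. by rewrite /R big_geq. Qed.

Lemma RS x i j : R x i.+1 j = R x i j + g x j i.
Proof. by rewrite /R big_nat_recr. Qed.

Lemma RSlt x i j : i < n -> R x i.+1 j = R x i j + (j <= Pn x i).
Proof. by move=> h; rewrite RS /g h andbT. Qed.

Lemma R_swap x (i : 'I_n) j k : i.+1 < n ->
  R (x * adj i)%g k j = if k == i.+1 then R x i j + (j <= Pn x i.+1) else R x k j.
Proof.
move=> h; have hi : i < n := ltn_ord i.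
elim: k => [|k IH]; first by rewrite !R0.
rewrite RS IH /g Pn_swap //.
case: (ltngtP k i) => [lt|gt|eq].
- have -> : (k == i.+1) = false by apply/eqP; lia.
  have -> : (k.+1 == i.+1) = false by apply/eqP; lia.
  have -> : swapn i k = k by rewrite /swapn ifN ?ifN //; apply/eqP; lia.
  by rewrite RS.
- case: (eqVneq k i.+1) => [e|ne].
  + subst k; have -> : (i.+2 == i.+1) = false by apply/eqP; lia.
    have -> : swapn i i.+1 = i by rewrite /swapn ifN ?eqxx //; apply/eqP; lia.
    rewrite h andbT (RSlt _ _ h) (RSlt _ _ hi); lia.
  + have -> : (k.+1 == i.+1) = false by apply/eqP; lia.
    have -> : swapn i k = k by rewrite /swapn ifN ?ifN //; apply/eqP; lia.
    by rewrite RS.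
- subst k; have -> : (nat_of_ord i == i.+1) = false by apply/eqP; lia.
  by rewrite eqxx /swapn eqxx hi andbT.
Qed.

Definition tle (u v : 'S_n) := forall i j, R u i j <= R v i j.

Definition asc (x : 'S_n) (i : nat) := Pn x i < Pn x i.+1.


Lemma tle_refl x : tle x x. Proof. by []. Qed.
Lemma tle_trans y x z : tle x y -> tle y z -> tle x z.
Proof. by move=> h1 h2 i j; apply: leq_trans (h1 i j) (h2 i j). Qed.

Lemma Pn_neq x (i : 'I_n) : i.+1 < n -> Pn x i != Pn x i.+1.
Proof. by move=> h; apply/eqP => /Pn_inj; move=> /(_ (ltn_ord i) h); lia. Qed.

Lemma asc_swap x (i : 'I_n) : i.+1 < n -> asc (x * adj i)%g i = ~~ asc x i.
Proof.
move=> h; rewrite /asc !Pn_swap // /swapn eqxx ifN; last by apply/eqP; lia.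
rewrite eqxx; have := Pn_neq x h; lia.
Qed.

Lemma mulsK x (i : 'I_n) : (x * adj i * adj i)%g = x.
Proof. by rewrite -mulgA adjK mulg1. Qed.

Lemma asc_imp x (i : 'I_n) j : asc x i -> j <= Pn x i -> j <= Pn x i.+1.
Proof. rewrite /asc; lia. Qed.
Lemma desc_imp x (i : 'I_n) j : ~~ asc x i -> j <= Pn x i.+1 -> j <= Pn x i.
Proof. rewrite /asc; lia. Qed.

Section Steps.
Variables (i : 'I_n) (h : i.+1 < n).
Let hi : i < n := ltn_ord i.

Lemma tle_row u v j : tle u v ->
  [/\ R u i j <= R v i j,
      R u i j + (j <= Pn u i) <= R v i j + (j <= Pn v i) &
      R u i j + (j <= Pn u i) + (j <= Pn u i.+1) <=
      R v i j + (j <= Pn v i) + (j <= Pn v i.+1)].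
Proof.
move=> t; have := t i j; have := t i.+1 j; have := t i.+2 j.
by rewrite !(RSlt _ _ h) !(RSlt _ _ hi).
Qed.

Lemma T1 u v : asc v i -> tle u v -> tle (u * adj i)%g (v * adj i)%g.
Proof.
move=> a t k j; rewrite !R_swap //; case: eqP => _; last exact: t.
have := asc_imp (j:=j) a; case: (tle_row j t) => h0 h1 h2.
move: h0 h1 h2; case: (j <= Pn u i); case: (j <= Pn u i.+1);
  case: (j <= Pn v i); case: (j <= Pn v i.+1) => //=; lia.
Qed.

Lemma T2a u v : ~~ asc v i -> ~~ asc u i -> tle u v -> tle (u * adj i)%g (v * adj i)%g.
Proof.
move=> a b t k j; rewrite !R_swap //; case: eqP => _; last exact: t.
have := desc_imp (j:=j) a; have := desc_imp (j:=j) b; case: (tle_row j t) => h0 h1 h2.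
move: h0 h1 h2; case: (j <= Pn u i); case: (j <= Pn u i.+1);
  case: (j <= Pn v i); case: (j <= Pn v i.+1) => //=; lia.
Qed.

Lemma T2b u v : ~~ asc v i -> asc u i -> tle u v -> tle u (v * adj i)%g.
Proof.
move=> a b t k j; rewrite !R_swap //; case: eqP => [->|_]; last exact: t.
rewrite (RSlt _ _ hi).
have := desc_imp (j:=j) a; have := asc_imp (j:=j) b; case: (tle_row j t) => h0 h1 h2.
move: h0 h1 h2; case: (j <= Pn u i); case: (j <= Pn u i.+1);
  case: (j <= Pn v i); case: (j <= Pn v i.+1) => //=; lia.
Qed.

Lemma asc_tle x : asc x i -> tle x (x * adj i)%g.
Proof.
move=> a k j; rewrite !R_swap //; case: eqP => [->|_]; last by [].
rewrite (RSlt _ _ hi); have := asc_imp (j:=j) a.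
case: (j <= Pn x i); case: (j <= Pn x i.+1) => //=; lia.
Qed.

Lemma desc_tle x : ~~ asc x i -> tle (x * adj i)%g x.
Proof.
move=> a k j; rewrite !R_swap //; case: eqP => [->|_]; last by [].
rewrite (RSlt _ _ hi); have := desc_imp (j:=j) a.
case: (j <= Pn x i); case: (j <= Pn x i.+1) => //=; lia.
Qed.

End Steps.

End Tab.

Section Len.
Variable n : nat.
Implicit Types x u v : 'S_n.

Definition len x : nat :=
  \sum_(a : 'I_n) \sum_(b : 'I_n) ((a < b) * ((x^-1)%g b < (x^-1)%g a)).

Lemma swapn_ineq (i a b : nat) :
  (swapn i a < swapn i b) + ((a == i) && (b == i.+1)) =
  (a < b) + ((a == i.+1) && (b == i)).
Proof.
rewrite /swapn; case: (eqVneq a i) => [->|na]; case: (eqVneq b i) => [->|nb];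
 rewrite ?eqxx /=; try (case: (eqVneq b i.+1) => [->|nb1]); try (case: (eqVneq a i.+1) => [->|na1]);
 rewrite ?eqxx /= ?andbF ?andbT ?andFb ?andTb; try lia.
Qed.

Lemma delta_sum (F : 'I_n -> 'I_n -> nat) (p q : 'I_n) :
  \sum_(a : 'I_n) \sum_(b : 'I_n) (((a == p) && (b == q)) * F a b) = F p q.
Proof.
rewrite (bigD1 p) //=.
have -> : \sum_(a | a != p) \sum_b (((a == p) && (b == q)) * F a b) = 0.
  by apply: big1 => a ap; apply: big1 => b _; rewrite (negbTE ap).
rewrite (bigD1 q) //=.
have -> : \sum_(b | b != q) (((p == p) && (b == q)) * F p b) = 0.
  by apply: big1 => b bq; rewrite (negbTE bq) andbF.
by rewrite !eqxx mul1n !addn0.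
Qed.

Lemma sum2_shift (F1 F2 G : 'I_n -> 'I_n -> nat) (p q p' q' : 'I_n) :
  (forall a b, F1 a b + ((a == p) && (b == q)) * G a b =
               F2 a b + ((a == p') && (b == q')) * G a b) ->
  \sum_a \sum_b F1 a b + G p q = \sum_a \sum_b F2 a b + G p' q'.
Proof.
move=> E; rewrite -(delta_sum G p q) -(delta_sum G p' q') -!big_split.
apply: eq_bigr => a _; rewrite -!big_split; apply: eq_bigr => b _; exact: E.
Qed.

Lemma len_asc x (i : 'I_n) (h : i.+1 < n) : asc x i -> len (x * adj i)%g = (len x).+1.
Proof.
rewrite /asc (PnE x i) (PnE x (Ordinal h)) => ha.
set s := adj i.
have sE : forall o, val (s o) = swapn i o.
  move=> o; rewrite /s adj_valid /swapn; case: (eqVneq o i) => [->|ne1]; first by rewrite tpermL eqxx.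
  have ne1' : (val o == i) = false by apply/negbTE; rewrite -(inj_eq val_inj) in ne1.
  case: (eqVneq o (Ordinal h)) => [->|ne2].
    by rewrite tpermR /= (_ : (i.+1 == i) = false) ?eqxx //; apply/eqP; lia.
  have ne2' : (val o == i.+1) = false.
    by apply/negbTE; apply: contra ne2 => /eqP e; apply/eqP/val_inj.
  by rewrite ne1' ne2' tpermD // eq_sym.
have sK : forall o, s (s o) = o by move=> o; rewrite -permM adjK perm1.
have si : injective s by exact: perm_inj.
rewrite /len (reindex_inj si).
under eq_bigr => a _ do rewrite (reindex_inj si).
have E : forall a b : 'I_n,
  (s a < s b) * (((x * s)^-1)%g (s b) < ((x * s)^-1)%g (s a)) +
  ((a == i) && (b == Ordinal h)) * ((x^-1)%g b < (x^-1)%g a) =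
  (a < b) * ((x^-1)%g b < (x^-1)%g a) +
  ((a == Ordinal h) && (b == i)) * ((x^-1)%g b < (x^-1)%g a).
  have sV : (s^-1)%g = s.
    by rewrite -[(s^-1)%g]mulg1 -(adjK i) mulgA mulVg mul1g.
  move=> a b; rewrite invgM sV permM sK permM sK.
  rewrite -!mulnDl; congr (_ * _); rewrite !sE; exact: (swapn_ineq i a b).
have := sum2_shift E; rewrite /= ltnNge (ltnW ha) /= ha.
by rewrite addn0 addn1 => ->.
Qed.


Lemma len_desc x (i : 'I_n) (h : i.+1 < n) : ~~ asc x i -> len x = (len (x * adj i)%g).+1.
Proof.
move=> d; have := @len_asc (x * adj i)%g i h; rewrite asc_swap // d mulsK.
by move=> /(_ isT) ->.
Qed.

Lemma Pn1 a : Pn (1%g : 'S_n) a = a.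
Proof.
case: (ltnP a n) => ha; last by rewrite Pn_out.
by rewrite (PnE _ (Ordinal ha)) invg1 perm1.
Qed.

Lemma len1 : len (1%g : 'S_n) = 0.
Proof.
apply: big1 => a _; apply: big1 => b _; rewrite invg1 !perm1.
by case: (ltngtP a b).
Qed.

Lemma id_of_le x : (forall a, a < n -> Pn x a <= a) -> x = 1%g.
Proof.
move=> H.
have E : forall a, a < n -> Pn x a = a.
  elim/ltn_ind => a IH ha; have := H a ha; rewrite leq_eqVlt => /orP [/eqP //|lt].
  have hb : Pn x a < n by exact: Pn_lt.
  have := IH _ lt hb => /Pn_inj; move=> /(_ hb ha) e; lia.
apply/permP => o; rewrite perm1.
have := E o (ltn_ord o); rewrite PnE => /val_inj e.
by rewrite -{1}e permKV.
Qed.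

Lemma incr_id x : (forall a, a.+1 < n -> Pn x a < Pn x a.+1) -> x = 1%g.
Proof.
move=> H; apply: id_of_le.
suff S : forall k a, a + k = n.-1 -> a < n -> Pn x a <= a.
  by move=> a ha; apply: (S (n.-1 - a)); lia.
elim=> [|k IH] a e ha.
  have := Pn_lt x ha; lia.
have h1 : a.+1 < n by lia.
have := IH a.+1 (ltac:(lia)) h1; have := H a h1; lia.
Qed.

Lemma exists_desc x : x != 1%g -> exists i : 'I_n, i.+1 < n /\ ~~ asc x i.
Proof.
move=> nx.
case: (boolP [exists i : 'I_n, (i.+1 < n) && ~~ asc x i]).
  by move=> /existsP [i /andP [h d]]; exists i.
rewrite negb_exists => /forallP H; exfalso; move/eqP: nx; apply.
apply: incr_id => a ha; have hh : a < n by lia.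
have := H (Ordinal hh); rewrite /= ha /= negbK; exact.
Qed.

Lemma prodw_rcons (w : seq 'I_n) i : prodw (rcons w i) = (prodw w * adj i)%g.
Proof. by rewrite /prodw big_rcons. Qed.

Lemma prodw_nil : prodw ([::] : seq 'I_n) = 1%g.
Proof. by rewrite /prodw big_nil. Qed.

Lemma len_word w v : word_for w v -> len v <= size w.
Proof.
elim/last_ind: w v => [|w i IH] v [al <-]; first by rewrite prodw_nil len1.
move: al; rewrite all_rcons => /andP [vi al].
rewrite prodw_rcons size_rcons; have := IH _ (conj al erefl).
case: (boolP (asc (prodw w) i)) => a.
  by rewrite (len_asc vi a).
by rewrite (len_desc vi a); lia.
Qed.

Lemma word_exists v : exists w, word_for w v /\ size w = len v.
Proof.
have [k lek] := ubnP (len v); elim: k v lek => // k IH v lek.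
case: (eqVneq v 1%g) => [->|nv].
  by exists [::]; rewrite /word_for len1 prodw_nil.
have [i [h d]] := exists_desc nv.
have e := len_desc h d.
have [w [[al pw] sz]] := IH (v * adj i)%g (ltac:(lia)).
exists (rcons w i); split; last by rewrite size_rcons sz e.
split; first by rewrite all_rcons al andbT.
by rewrite prodw_rcons pw mulsK.
Qed.

Lemma reducedP w v : reduced_word w v <-> word_for w v /\ size w = len v.
Proof.
split.
  move=> [wf mn]; split => //; apply/eqP; rewrite eqn_leq len_word // andbT.
  by have [w' [wf' <-]] := word_exists v; apply: mn.
by move=> [wf sz]; split => // w' wf'; rewrite sz; apply: len_word.
Qed.

Lemma subseq_rcons_inv (w' w : seq 'I_n) i : subseq w' (rcons w i) ->
  subseq w' w \/ exists w'', w' = rcons w'' i /\ subseq w'' w.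
Proof.
rewrite -subseq_rev rev_rcons; case: (lastP w') => [|w'' y].
  by move=> _; left; exact: sub0seq.
rewrite rev_rcons /=; case: eqP => [-> H|ne H].
  by right; exists w''; rewrite -subseq_rev.
by left; rewrite -subseq_rev rev_rcons.
Qed.

Lemma subseq_rcons2 (w' w : seq 'I_n) i : subseq w' w -> subseq (rcons w' i) (rcons w i).
Proof. by rewrite -subseq_rev -[subseq (rcons _ _) _]subseq_rev !rev_rcons /= eqxx. Qed.

Lemma red_rcons w i v : reduced_word (rcons w i) v ->
  [/\ i.+1 < n, asc (prodw w) i, reduced_word w (prodw w) & v = (prodw w * adj i)%g].
Proof.
move=> /reducedP [[al pv] sz]; move: al; rewrite all_rcons => /andP [vi al].
rewrite prodw_rcons in pv; subst v.
have lw := len_word (conj al (erefl (prodw w))).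
case: (boolP (asc (prodw w) i)) => a; last first.
  by move: sz lw; rewrite size_rcons (len_desc vi a); lia.
split => //; apply/reducedP; split => //.
by move: sz; rewrite size_rcons (len_asc vi a); lia.
Qed.

Lemma bruhat_tle u v : bruhat_le u v -> tle u v.
Proof.
move=> [w [red [w' [sub [al pu]]]]]; subst u.
elim/last_ind: w v w' red sub al => [|w i IH] v w' red sub al.
  move: sub; rewrite subseq0 => /eqP ->; case: red => [[_ <-] _]; exact: tle_refl.
have [vi a rw ->] := red_rcons red.
case: (subseq_rcons_inv sub) => [s1|[w'' [e s2]]]; last subst w'.
  exact: tle_trans (IH _ _ rw s1 al) (asc_tle vi a).
rewrite prodw_rcons; apply: T1 => //.
by apply: IH rw s2 _; move: al; rewrite all_rcons => /andP [].
Qed.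

Lemma R1_0 i j : i <= j -> R (1%g : 'S_n) i j = 0.
Proof.
move=> h; apply: big1_seq => b /andP [_]; rewrite mem_index_iota => /andP [_ hb].
by rewrite /g Pn1; case: leqP => //; lia.
Qed.

Lemma tle_one u : tle u 1%g -> u = 1%g.
Proof.
move=> t; apply: id_of_le => a ha; have := t a.+1 a.+1.
rewrite R1_0 // (RSlt _ _ ha); lia.
Qed.

Lemma tle_bruhat u v : tle u v -> bruhat_le u v.
Proof.
have [k lek] := ubnP (len v); elim: k u v lek => // k IH u v lek t.
case: (eqVneq v 1%g) => [ev|nv].
  subst v; rewrite (tle_one t); exists [::]; split.
    by apply/reducedP; rewrite /word_for len1 prodw_nil.
  by exists [::]; rewrite /word_for prodw_nil.
have [i [h d]] := exists_desc nv.
have e := len_desc h d.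
have mk : forall w, reduced_word w (v * adj i)%g -> reduced_word (rcons w i) v.
  move=> w /reducedP [[al pw] sz]; apply/reducedP; split.
    by split; [rewrite all_rcons al andbT; exact: h | rewrite prodw_rcons pw mulsK].
  by rewrite size_rcons sz e.
case: (boolP (asc u i)) => a.
  have [w [rw [w' [sw wf]]]] := IH u (v * adj i)%g (ltac:(lia)) (T2b h d a t).
  exists (rcons w i); split; first exact: mk.
  by exists w'; split => //; apply: subseq_trans sw (subseq_rcons _ _).
have [w [rw [w' [sw [al pw]]]]] := IH (u * adj i)%g (v * adj i)%g (ltac:(lia)) (T2a h d a t).
exists (rcons w i); split; first exact: mk.
exists (rcons w' i); split; first exact: subseq_rcons2.
by split; [rewrite all_rcons al andbT; exact: h | rewrite prodw_rcons pw mulsK].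
Qed.

Lemma bruhatE u v : bruhat_le u v <-> tle u v.
Proof. by split; [apply: bruhat_tle | apply: tle_bruhat]. Qed.

End Len.

Section Sym.
Variable n : nat.
Implicit Types x y z u v : 'S_n.

Lemma adjV (i : 'I_n) : ((adj i)^-1)%g = adj i.
Proof. by rewrite -[((adj i)^-1)%g]mulg1 -(adjK i) mulgA mulVg mul1g. Qed.

Lemma prodw_rev (w : seq 'I_n) : prodw (rev w) = ((prodw w)^-1)%g.
Proof.
elim/last_ind: w => [|w i IH]; first by rewrite /prodw big_nil invg1.
by rewrite rev_rcons prodw_rcons invgM adjV /prodw big_cons /= -IH.
Qed.

Lemma word_for_rev (w : seq 'I_n) v : word_for w v -> word_for (rev w) (v^-1)%g.
Proof. by move=> [al pv]; split; [rewrite all_rev | rewrite prodw_rev pv]. Qed.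

Lemma reduced_rev (w : seq 'I_n) v : reduced_word w v -> reduced_word (rev w) (v^-1)%g.
Proof.
move=> [wf mn]; split; first exact: word_for_rev.
move=> w' /word_for_rev; rewrite invgK => /mn; by rewrite !size_rev.
Qed.

Lemma bruhat_inv u v : bruhat_le u v -> bruhat_le (u^-1)%g (v^-1)%g.
Proof.
move=> [w [rw [w' [sw wf]]]]; exists (rev w); split; first exact: reduced_rev.
by exists (rev w'); split; [rewrite subseq_rev | exact: word_for_rev].
Qed.

Lemma bruhat_invE u v : bruhat_le (u^-1)%g (v^-1)%g <-> bruhat_le u v.
Proof. by split => [/bruhat_inv|/bruhat_inv]; rewrite ?invgK. Qed.

Definition w0 : 'S_n := perm (@rev_ord_inj n).

Lemma w0K : (w0 * w0 = 1)%g.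
Proof. by apply/permP => o; rewrite permM !permE rev_ordK. Qed.

Lemma w0V : (w0^-1)%g = w0.
Proof. by rewrite -[(w0^-1)%g]mulg1 -w0K mulgA mulVg mul1g. Qed.

Lemma Pn_w0 y a : a < n -> Pn (y * w0)%g a = Pn y (n - a.+1).
Proof.
move=> ha; rewrite (PnE _ (Ordinal ha)) invgM w0V permM.
have -> : w0 (Ordinal ha) = rev_ord (Ordinal ha) by rewrite permE.
by rewrite (PnE y (rev_ord (Ordinal ha))).
Qed.

Lemma R_w0 y i j : i <= n -> R (y * w0)%g i j + R y (n - i) j = R y n j.
Proof.
elim: i => [|i IH] hi; first by rewrite R0 subn0.
rewrite RS; have e : n - i = (n - i.+1).+1 by lia.
rewrite -(IH (ltnW hi)) e RS /g Pn_w0 //.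
have -> : n - i.+1 < n by lia.
by rewrite hi; lia.
Qed.

Lemma R_n y j : R y n j = R (1%g : 'S_n) n j.
Proof.
rewrite /R !big_mkord; rewrite (reindex_inj (@perm_inj _ y)).
apply: eq_bigr => o _; rewrite /g !ltn_ord !andbT Pn1.
by rewrite (PnE y (y o)) permK.
Qed.

Lemma R_big x i j : n <= i -> R x i j = R x n j.
Proof.
move=> hi; rewrite -(subnKC hi); elim: (i - n) => [|k IH]; first by rewrite addn0.
by rewrite addnS RS IH /g (_ : n + k < n = false) ?andbF ?addn0 //; lia.
Qed.

Lemma R_mono x i k j : i <= k -> R x i j <= R x k j.
Proof. by move=> h; rewrite /R (big_cat_nat (leq0n i) h) leq_addr. Qed.

Lemma tle_w0 y z : tle y z -> tle (z * w0)%g (y * w0)%g.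
Proof.
move=> t i j; case: (leqP i n) => hi; last first.
  rewrite !(R_big _ _ (ltnW hi)); have := t 0 j; have := t n j.
  have := @R_w0 z n j (leqnn n); have := @R_w0 y n j (leqnn n).
  rewrite subnn !R0 (R_n y) (R_n z); lia.
have := @R_w0 z i j hi; have := @R_w0 y i j hi; have := t (n - i) j.
rewrite (R_n y) (R_n z); lia.
Qed.

Lemma tle_w0E y z : tle (z * w0)%g (y * w0)%g <-> tle y z.
Proof.
split=> [h|]; last exact: tle_w0.
by have := tle_w0 h; rewrite -!mulgA w0K !mulg1.
Qed.

Definition T x : 'S_n := (w0 * x^-1)%g.

Lemma TE x : T x = ((x * w0)^-1)%g.
Proof. by rewrite /T invgM w0V. Qed.

Lemma T_rev y z : bruhat_le y z <-> bruhat_le (T z) (T y).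
Proof. by rewrite !TE bruhat_invE !bruhatE tle_w0E. Qed.

Definition Tinv x : 'S_n := ((w0 * x)^-1)%g.
Lemma TK x : T (Tinv x) = x.
Proof. by rewrite /T /Tinv invgK mulgA w0K mul1g. Qed.
Lemma TinvK x : Tinv (T x) = x.
Proof. by rewrite /T /Tinv mulgA w0K mul1g invgK. Qed.

Lemma pipsi_T (d : seq nat) y : pipsi d (T y) =1 piphi d y.
Proof.
move=> k; rewrite /pipsi /piphi /T invgM invgK w0V permM permE /=.
apply: eq_count => dj /=; have := ltn_ord (y k); lia.
Qed.

End Sym.

Section LemA.
Variable n : nat.
Implicit Types x y z u v : 'S_n.

Lemma adj_val (i : 'I_n) (h : i.+1 < n) o : val (adj i o) = swapn i o.
Proof.
rewrite adj_valid /swapn; case: (eqVneq o i) => [->|ne1]; first by rewrite tpermL eqxx.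
have ne1' : (val o == i) = false by apply/negbTE; rewrite -(inj_eq val_inj) in ne1.
case: (eqVneq o (Ordinal h)) => [->|ne2].
  by rewrite tpermR /= (_ : (i.+1 == i) = false) ?eqxx //; apply/eqP; lia.
have ne2' : (val o == i.+1) = false.
  by apply/negbTE; apply: contra ne2 => /eqP e; apply/eqP/val_inj.
by rewrite ne1' ne2' tpermD // eq_sym.
Qed.

Lemma tle_anti x y : tle x y -> tle y x -> x = y.
Proof.
move=> t1 t2.
have E : forall i j, R x i j = R y i j by move=> i j; apply/eqP; rewrite eqn_leq t1 t2.
have P : forall o : 'I_n, val ((x^-1)%g o) = val ((y^-1)%g o).
  move=> o; have F : forall j, (j <= Pn x o) = (j <= Pn y o).
    move=> j; have := E o.+1 j; rewrite !(RSlt _ _ (ltn_ord o)) E.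
    by case: (j <= Pn x o); case: (j <= Pn y o); lia.
  rewrite -!PnE; apply/eqP; rewrite eqn_leq -F leqnn F leqnn //.
have : (x^-1 = y^-1)%g by apply/permP => o; apply: val_inj; exact: P.
by move/(congr1 (fun p => (p^-1)%g)); rewrite !invgK.
Qed.

Variable L : nat -> nat.
Hypothesis mono : forall a b, a <= b -> L a <= L b.

Definition FL x (k : 'I_n) : nat := L (val (x k)).

Definition basc x := forall i : 'I_n, i.+1 < n -> L i = L i.+1 -> asc x i.

Lemma FL_swap x (i : 'I_n) : i.+1 < n -> L i = L i.+1 -> FL (x * adj i)%g =1 FL x.
Proof.
move=> h e k; rewrite /FL permM adj_val // /swapn.
change (\val (x k)) with (nat_of_ord (x k)); move: (nat_of_ord (x k)) => m.
case: eqP => [->|_]; first by rewrite -e.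
by case: eqP => [->|_].
Qed.

Lemma blk_incr x : basc x -> forall a b, a < b -> b < n -> L a = L b -> Pn x a < Pn x b.
Proof.
move=> Hx a; elim=> // b IH ab bn Lab.
have hb : b < n by lia.
have Lb : L b = L b.+1.
  apply/eqP; rewrite eqn_leq mono //= -Lab mono //; lia.
have := Hx (Ordinal hb) bn Lb; rewrite /asc /=.
case: (eqVneq a b) => [-> //|ne].
have := IH (ltac:(lia)) hb (ltac:(lia)); lia.
Qed.

Lemma no_lt x v : basc x -> basc v -> FL x =1 FL v -> forall m : 'I_n,
  (forall m', m' < m -> Pn x m' = Pn v m') -> ~~ (Pn x m < Pn v m).
Proof.
move=> bx bv F m IH; apply/negP; rewrite !PnE => lt.
set kx := (x^-1)%g m in lt; set kv := (v^-1)%g m in lt.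
set m2 := v kx.
have Lm : L m = L m2 by have := F kx; rewrite /FL /kx permKV.
have ne : m2 != m.
  apply/eqP => e; have : kx = kv by rewrite /kv -e /m2 permK.
  by move=> e2; rewrite e2 ltnn in lt.
case: (ltngtP m2 m) => [lt2|gt2|eq2].
- have := IH m2 lt2; rewrite !PnE /m2 permK => e.
  have : (x^-1)%g m2 = kx by apply: val_inj.
  move/(congr1 x); rewrite permKV /kx permKV => e2.
  by move/eqP: ne; apply; rewrite e2.
- have := blk_incr bv gt2 (ltn_ord m2) Lm; rewrite !PnE /m2 permK -/kv; lia.
- by move/eqP: ne; apply; apply: val_inj.
Qed.

Lemma basc_uniq x v : basc x -> basc v -> FL x =1 FL v -> x = v.
Proof.
move=> bx bv F.
have E : forall m, m < n -> Pn x m = Pn v m.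
  elim/ltn_ind => m IH hm.
  have IH' : forall m', m' < Ordinal hm -> Pn x m' = Pn v m'.
    by move=> m' /= lt; apply: IH; lia.
  have IH'' : forall m', m' < Ordinal hm -> Pn v m' = Pn x m'.
    by move=> m' lt; rewrite IH' .
  have F' : FL v =1 FL x by move=> k; rewrite F.
  have := no_lt bx bv F IH'; have := no_lt bv bx F' IH''; rewrite /=; lia.
have : (x^-1 = v^-1)%g.
  by apply/permP => o; apply: val_inj; rewrite -!PnE; apply: E.
by move/(congr1 (fun p => (p^-1)%g)); rewrite !invgK.
Qed.

End LemA.

Section LemA2.
Variable n : nat.
Implicit Types x y z u v : 'S_n.
Variable L : nat -> nat.
Hypothesis mono : forall a b, a <= b -> L a <= L b.

Definition inI u v x := tle u x /\ tle x v.
Definition match_ (F G : 'S_n -> 'I_n -> nat) u v u' v' :=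
  forall x, inI u v x -> exists y, inI u' v' y /\ F x =1 G y.

Lemma match_trans F u v u1 v1 u2 v2 :
  match_ F F u v u1 v1 -> match_ F F u1 v1 u2 v2 -> match_ F F u v u2 v2.
Proof.
move=> m1 m2 x /m1 [y [iy Fy]]; have [z [iz Fz]] := m2 y iy.
by exists z; split => // k; rewrite Fy Fz.
Qed.

Let F := @FL n L.

Lemma step u v (i : 'I_n) : i.+1 < n -> L i = L i.+1 -> ~~ asc v i -> tle u v ->
  exists u2, [/\ tle u2 (v * adj i)%g, match_ F F u v u2 (v * adj i)%g
                 & match_ F F u2 (v * adj i)%g u v].
Proof.
move=> h Li d t; set s := adj i.
have Fs : forall x, F (x * s)%g =1 F x by move=> x; apply: FL_swap.
have dv : tle (v * s)%g v := desc_tle h d.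
have avs : asc (v * s)%g i by rewrite asc_swap.
case: (boolP (asc u i)) => a.
  exists u; split; first exact: T2b.
    move=> x [ux xv]; case: (boolP (asc x i)) => ax.
      by exists x; split => //; split => //; apply: T2b.
    exists (x * s)%g; split; last by move=> k; rewrite Fs.
    by split; [apply: T2b | apply: T2a].
  move=> y [uy yv]; exists y; split => //; split => //; exact: tle_trans yv dv.
have du : tle (u * s)%g u := desc_tle h a.
exists (u * s)%g; split; first exact: T2a.
  move=> x [ux xv]; case: (boolP (asc x i)) => ax.
    exists x; split => //; split; [exact: tle_trans du ux | exact: T2b].
  exists (x * s)%g; split; last by move=> k; rewrite Fs.
  by split; apply: T2a.
move=> y [uy yv]; case: (boolP (asc y i)) => ay.
  exists (y * s)%g; split; last by move=> k; rewrite Fs.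
  split.
    by have := T1 h ay uy; rewrite mulsK.
  by have := T1 h avs yv; rewrite mulsK.
exists y; split => //; split; last exact: tle_trans yv dv.
have aus : asc (u * s)%g i by rewrite asc_swap.
have t2 := T2b h ay aus uy.
have ays : asc (y * s)%g i by rewrite asc_swap.
by have := T1 h ays t2; rewrite !mulsK.
Qed.

Lemma min_basc v : basc L v -> forall x, F x =1 F v -> tle v x.
Proof.
move=> bv x; have [k lek] := ubnP (len x); elim: k x lek => // k IH x lek Fx.
case: (boolP [exists i : 'I_n, [&& i.+1 < n, L i == L i.+1 & ~~ asc x i]]).
  move=> /existsP [i /and3P [h /eqP Li d]].
  have := len_desc h d => e.
  apply: tle_trans (desc_tle h d).
  apply: IH; first lia.
  by move=> kk; rewrite -(Fx kk); apply: FL_swap.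
rewrite negb_exists => /forallP H.
have bx : basc L x.
  move=> i h Li; have := H i; rewrite h Li eqxx /=; by rewrite negbK.
by rewrite (basc_uniq mono bx bv Fx); exact: tle_refl.
Qed.

Lemma lemA u v : tle u v -> exists u' v',
  [/\ tle u' v', (forall x, F x =1 F v' -> tle x v' -> x = v'),
      match_ F F u v u' v' & match_ F F u' v' u v].
Proof.
have [k lek] := ubnP (len v); elim: k u v lek => // k IH u v lek t.
case: (boolP [exists i : 'I_n, [&& i.+1 < n, L i == L i.+1 & ~~ asc v i]]).
  move=> /existsP [i /and3P [h /eqP Li d]].
  have e := len_desc h d.
  have [u2 [t2 m1 m2]] := step h Li d t.
  have [u' [v' [t' bi m3 m4]]] := IH u2 (v * adj i)%g (ltac:(lia)) t2.
  exists u', v'; split => //; [exact: match_trans m1 m3 | exact: match_trans m4 m2].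
rewrite negb_exists => /forallP H.
have bv : basc L v.
  move=> i h Li; have := H i; rewrite h Li eqxx /=; by rewrite negbK.
exists u, v; split => //.
- by move=> x Fx tx; apply: tle_anti tx (min_basc bv Fx).
- by move=> x ix; exists x; split.
- by move=> x ix; exists x; split.
Qed.

End LemA2.

Section Conv.
Import GRing.Theory Num.Theory.
Local Open Scope ring_scope.
Variable R : realType.
Variable n : nat.

Lemma conv_transfer (f g : 'S_n -> 'I_n -> nat) (u v u' v' : 'S_n) :
  (forall x, in_interval u v x -> exists y, in_interval u' v' y /\ f x =1 g y) ->
  forall p, @conv_interval R n f u v p -> @conv_interval R n g u' v' p.
Proof.
move=> M p [lam [l0 lout l1 pE]].
have ch : forall x, {y | in_interval u v x -> in_interval u' v' y /\ f x =1 g y}.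
  move=> x; apply: ClassicalEpsilon.constructive_indefinite_description.
  case: (Classical_Prop.classic (in_interval u v x)) => [ix|nix].
    by have [y Hy] := M x ix; exists y.
  by exists x.
pose c x := proj1_sig (ch x).
have cP : forall x, in_interval u v x -> in_interval u' v' (c x) /\ f x =1 g (c x).
  by move=> x; exact: (proj2_sig (ch x)).
have lam0 : forall x, lam x != 0 -> in_interval u v x.
  move=> x nz; case: (Classical_Prop.classic (in_interval u v x)) => // nix.
  by rewrite lout // eqxx in nz.
exists (fun y => \sum_(x | c x == y) lam x); split.
- by move=> y; apply: sumr_ge0 => x _.
- move=> y ny; apply: big1 => x /eqP cx.
  case: (eqVneq (lam x) 0) => // nz; exfalso; apply: ny.
  by rewrite -cx; case: (cP x (lam0 x nz)).
- rewrite -l1 [RHS](partition_big c xpredT) //=.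
- rewrite pE [LHS](partition_big c xpredT) //=.
  apply: eq_bigr => y _; rewrite scaler_suml; apply: eq_big => // x /eqP cx.
  case: (eqVneq (lam x) 0) => [->|nz]; first by rewrite !scale0r.
  have [_ Fx] := cP x (lam0 x nz); congr (_ *: _).
  by apply/rowP => k; rewrite !mxE Fx cx.
Qed.

End Conv.

Section Main.
Variable R : realType.
Variable n : nat.
Variable d : seq nat.
Implicit Types x y z u v : 'S_n.

Definition L1 (m : nat) := count (fun dj => n - dj <= m) d.
Definition L3 (m : nat) := count (fun dj => dj <= m) d.

Lemma mono1 a b : a <= b -> L1 a <= L1 b.
Proof. by move=> h; apply: sub_count => dj /= h2; apply: leq_trans h2 h. Qed.
Lemma mono3 a b : a <= b -> L3 a <= L3 b.
Proof. by move=> h; apply: sub_count => dj /= h2; apply: leq_trans h2 h. Qed.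

Lemma piphi_FL x : piphi d x =1 FL L1 x.
Proof. by []. Qed.

Lemma pipsi_FL x k : pipsi d x k = size d - FL L3 (x^-1)%g k.
Proof.
rewrite /pipsi /FL /L3; have := count_predC (fun dj => val ((x^-1)%g k) < dj) d.
have -> : count (predC (fun dj => val ((x^-1)%g k) < dj)) d =
          count (fun dj => dj <= val ((x^-1)%g k)) d.
  by apply: eq_count => dj /=; rewrite -leqNgt.
lia.
Qed.

Lemma FL3_le x k : FL L3 x k <= size d.
Proof. exact: count_size. Qed.

Lemma pipsi_eq x y : FL L3 (x^-1)%g =1 FL L3 (y^-1)%g -> pipsi d x =1 pipsi d y.
Proof. by move=> h k; rewrite !pipsi_FL h. Qed.

Lemma pipsi_eq' x y : pipsi d x =1 pipsi d y -> FL L3 (x^-1)%g =1 FL L3 (y^-1)%g.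
Proof.
move=> h k; have := h k; rewrite !pipsi_FL.
have := FL3_le (x^-1)%g k; have := FL3_le (y^-1)%g k; lia.
Qed.

Lemma intE u v x : in_interval u v x <-> inI u v x.
Proof. by rewrite /in_interval /inI !bruhatE. Qed.

Lemma dir2 u v : bruhat_le u v -> exists u' v', BI d u' v' /\
   (forall p : 'rV[R]_n, tQ R d u v p <-> Q R d u' v' p).
Proof.
move=> uv; set a := Tinv v; set b := Tinv u.
have tab : tle a b by rewrite -bruhatE T_rev !TK.
have [u' [v' [t' bi m3 m4]]] := lemA mono1 tab.
exists u', v'; split.
  split; first by rewrite bruhatE.
  by move=> x Fx bx; apply: bi => //; rewrite -bruhatE.
move=> p; split; apply: conv_transfer.
  move=> x /intE [ux xv].
  have iz : inI a b (Tinv x).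
    by split; rewrite -bruhatE T_rev TK /a /b TK bruhatE.
  have [y [iy Fy]] := m3 _ iz; exists y; split; first by apply/intE.
  by move=> k; rewrite -{1}(TK x) pipsi_T piphi_FL Fy.
move=> y /intE iy; have [z [[az zb] Fz]] := m4 y iy.
exists (T z); split; last by move=> k; rewrite pipsi_T piphi_FL Fz.
split.
  by rewrite -(TK u) -/b -T_rev bruhatE.
by rewrite -(TK v) -/a -T_rev bruhatE.
Qed.

Lemma dir1 u v : bruhat_le u v -> exists u' v', tBI d u' v' /\
   (forall p : 'rV[R]_n, Q R d u v p <-> tQ R d u' v' p).
Proof.
move=> uv; set a := T v; set b := T u.
have tab : tle (a^-1)%g (b^-1)%g by rewrite -bruhatE bruhat_invE /a /b -T_rev.
have [u1 [v1 [t' bi m3 m4]]] := lemA mono3 tab.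
exists (u1^-1)%g, (v1^-1)%g; split.
  split; first by rewrite bruhat_invE bruhatE.
  move=> x Fx bx.
  have := bi (x^-1)%g; rewrite -bruhatE -(invgK v1) bruhat_invE => /(_ _ bx) <-.
    by rewrite invgK.
  by move=> k; rewrite (pipsi_eq' Fx) invgK.
move=> p; split; apply: conv_transfer.
  move=> x /intE [ux xv].
  have iz : inI (a^-1)%g (b^-1)%g ((T x)^-1)%g.
    by split; rewrite -bruhatE bruhat_invE -T_rev bruhatE.
  have [y [iy Fy]] := m3 _ iz; exists (y^-1)%g; split.
    by case: iy => i1 i2; split; rewrite bruhat_invE bruhatE.
  move=> k; rewrite -pipsi_T; apply: pipsi_eq => kk; by rewrite invgK Fy.
move=> y /intE [uy yv].
have iy : inI u1 v1 (y^-1)%g.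
  by split; rewrite -bruhatE -bruhat_invE ?invgK bruhatE.
have [z [[az zb] Fz]] := m4 _ iy.
exists (Tinv (z^-1)%g); split.
  split.
    by rewrite T_rev TK -/b -bruhat_invE invgK bruhatE.
  by rewrite T_rev TK -/a -bruhat_invE invgK bruhatE.
move=> k; rewrite -pipsi_T TK; apply: pipsi_eq => kk; by rewrite invgK Fz.
Qed.

End Main.

Theorem theorem4p6 (R : realType) (n : nat) (d : seq nat) :
  1 <= n -> d != [::] -> sorted ltn d -> 1 <= head 0 d -> last 0 d <= n ->
  (forall u v : 'S_n, BI d u v ->
     exists u' v' : 'S_n, tBI d u' v' /\
       (forall p : 'rV[R]_n, Q R d u v p <-> tQ R d u' v' p)) /\
  (forall u v : 'S_n, tBI d u v ->
     exists u' v' : 'S_n, BI d u' v' /\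
       (forall p : 'rV[R]_n, tQ R d u v p <-> Q R d u' v' p)).
Proof.
move=> _ _ _ _ _; split.
  by move=> u v [uv _]; apply: dir1.
by move=> u v [uv _]; apply: dir2.
Qed.
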